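(* If $\mathcal T$ is a projective Fraïssé family of trees and $\mathbb T$ is the projective Fraïssé limit of $\mathcal T$, then $\mathbb T$ is hereditarily unicoherent.
   Context: A graph is a pair $(V,E)$ with $E\subseteq V^2$ reflexive and symmetric; an epimorphism is a vertex map sending edges to edges and surjective on vertices and edges. A topological graph has a compact, zero-dimensional, second-countable vertex set and a closed edge set; epimorphisms between them are continuous. A tree is a finite graph in which any two distinct vertices are joined by a unique sequence of pairwise distinct vertices with consecutive ones adjacent. A set $S$ of vertices of a topological graph (with a given edge set) is disconnected if $S=P\cup Q$ with $P,Q$ nonempty disjoint closed and no edge between $P$ and $Q$; otherwise connected. A topological graph $G$ is hereditarily unicoherent if for any two nonempty closed connected topological graphs $P,Q$ with $V(P),V(Q)\subseteq V(G)$ and $E(P),E(Q)\subseteq E(G)$, the graph $(V(P)\cap V(Q),E(P)\cap E(Q))$ is connected. A projective Fraïssé family is a class $\mathcal F$ of finite graphs with a fixed class of epimorphisms with countably many isomorphism types, closed under composition and containing identities, such that any two members are images of a common member under fixed epimorphisms, and for fixed $f\colon B\to A$, $g\colon C\to A$ there are $D$ and fixed $f_0,g_0$ with $f\circ f_0=g\circ g_0$. Its projective Fraïssé limit is the unique topological graph $\mathbb F$ that is an inverse limit $\varprojlim\{F_n,\alpha_n\}$ of members of $\mathcal F$ with fixed bonding maps (edges coordinatewise) such that (i) every $A\in\mathcal F$ is the image of an admissible epimorphism from $\mathbb F$, and (ii) for admissible $f\colon\mathbb F\to A$ and fixed $g\colon B\to A$ there is admissible $h\colon \mathbb F\to B$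 with $f=g\circ h$; admissible means of the form $h'\circ\alpha^\infty_m$ with $h'$ fixed and $\alpha^\infty_m$ the projection. *)

(* Defs.v *)
From mathcomp Require Import all_boot.

Record graph := Graph {
  gV :> finType;
  gE : rel gV;
  gE_refl : reflexive gE;
  gE_sym : symmetric gE }.

Definition epi_gen (T S : Type) (ET : T -> T -> Prop) (ES : S -> S -> Prop)
    (f : T -> S) : Prop :=
  (forall x y, ET x y -> ES (f x) (f y)) /\
  (forall a, exists x, f x = a) /\
  (forall a b, ES a b -> exists x y, ET x y /\ f x = a /\ f y = b).

Arguments epi_gen {T S}.

Definition is_epi (B A : graph) (f : gV B -> gV A) : Prop :=
  epi_gen (fun x y => gE B x y) (fun x y => gE A x y) f.

Definition graph_iso (A B : graph) : Prop :=
  exists f : gV A -> gV B, bijective f /\ forall x y, gE A x y = gE B (f x) (f y).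

Definition is_tree (A : graph) : Prop :=
  forall a b : gV A, a != b ->
    exists! s : seq (gV A), path (gE A) a s /\ last a s = b /\ uniq (a :: s).

(* fx A B f : "f : A -> B is a fixed epimorphism" *)
Definition fixed_rel := forall A B : graph, (gV A -> gV B) -> Prop.

Definition is_proj_fraisse (mem : graph -> Prop) (fx : fixed_rel) : Prop :=
  (forall A B f, fx A B f -> mem A /\ mem B /\ is_epi A B f) /\
  (exists g : nat -> graph, forall A, mem A -> exists n, graph_iso A (g n)) /\
  (forall A, mem A -> fx A A (fun x => x)) /\
  (forall A B C (f : gV A -> gV B) (g : gV B -> gV C),
      fx A B f -> fx B C g -> fx A C (fun x => g (f x))) /\
  (forall A B, mem A -> mem B ->
      exists C (f : gV C -> gV A) (g : gV C -> gV B), fx C A f /\ fx C B g) /\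
  (forall A B C (f : gV B -> gV A) (g : gV C -> gV A), fx B A f -> fx C A g ->
      exists D (f0 : gV D -> gV B) (g0 : gV D -> gV C),
        fx D B f0 /\ fx D C g0 /\ forall x, f (f0 x) = g (g0 x)).

Definition thread (F : nat -> graph) (alpha : forall n, gV (F n.+1) -> gV (F n))
  : Type := {x : forall n, gV (F n) | forall n, alpha n (x n.+1) = x n}.

Definition tproj (F : nat -> graph) (alpha : forall n, gV (F n.+1) -> gV (F n))
  (m : nat) (x : thread F alpha) : gV (F m) := proj1_sig x m.

Definition tedge (F : nat -> graph) (alpha : forall n, gV (F n.+1) -> gV (F n))
  (x y : thread F alpha) : Prop := forall n, gE (F n) (tproj F alpha n x) (tproj F alpha n y).

Definition admissible (fx : fixed_rel) (F : nat -> graph)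
  (alpha : forall n, gV (F n.+1) -> gV (F n)) (A : graph)
  (h : thread F alpha -> gV A) : Prop :=
  exists m (h' : gV (F m) -> gV A), fx (F m) A h' /\ forall x, h x = h' (tproj F alpha m x).

Definition is_fraisse_limit (mem : graph -> Prop) (fx : fixed_rel)
  (F : nat -> graph) (alpha : forall n, gV (F n.+1) -> gV (F n)) : Prop :=
  (forall n, mem (F n)) /\
  (forall n, fx (F n.+1) (F n) (alpha n)) /\
  (forall A, mem A -> exists f : thread F alpha -> gV A,
       admissible fx F alpha A f /\ epi_gen (tedge F alpha) (fun a b => gE A a b) f) /\
  (forall A B (f : thread F alpha -> gV A) (g : gV B -> gV A),
       admissible fx F alpha A f -> fx B A g ->
       exists h : thread F alpha -> gV B,
         admissible fx F alpha B h /\ forall x, f x = g (h x)).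

(* The inverse limit carries the subspace topology of the product of the
   finite discrete spaces F n; the basic neighbourhoods of a thread x are the
   cylinders {y | y n = x n}. *)
Definition tclosed (F : nat -> graph) (alpha : forall n, gV (F n.+1) -> gV (F n))
  (S : thread F alpha -> Prop) : Prop :=
  forall x, (forall n, exists y, S y /\ tproj F alpha n y = tproj F alpha n x) -> S x.

Definition tclosed2 (F : nat -> graph) (alpha : forall n, gV (F n.+1) -> gV (F n))
  (R : thread F alpha -> thread F alpha -> Prop) : Prop :=
  forall x y, (forall n, exists x' y', R x' y' /\ tproj F alpha n x' = tproj F alpha n x
                                        /\ tproj F alpha n y' = tproj F alpha n y) -> R x y.

Definition tconnected (F : nat -> graph) (alpha : forall n, gV (F n.+1) -> gV (F n))
  (S : thread F alpha -> Prop) (R : thread F alpha -> thread F alpha -> Prop) : Prop :=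
  ~ exists P Q : thread F alpha -> Prop,
      (forall x, S x <-> P x \/ Q x) /\
      (exists x, P x) /\ (exists x, Q x) /\
      (forall x, ~ (P x /\ Q x)) /\
      tclosed F alpha P /\ tclosed F alpha Q /\
      (forall x y, P x -> Q y -> ~ R x y /\ ~ R y x).

(* (VP, EP) is a topological graph with V(P) ⊆ V(G), E(P) ⊆ E(G):
   closed vertex set (hence compact, zero-dimensional, second countable),
   closed reflexive symmetric edge set on VP. *)
Definition sub_tgraph (F : nat -> graph) (alpha : forall n, gV (F n.+1) -> gV (F n))
  (VP : thread F alpha -> Prop) (EP : thread F alpha -> thread F alpha -> Prop) : Prop :=
  tclosed F alpha VP /\ tclosed2 F alpha EP /\
  (forall x y, EP x y -> VP x /\ VP y) /\
  (forall x, VP x -> EP x x) /\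
  (forall x y, EP x y -> EP y x) /\
  (forall x y, EP x y -> tedge F alpha x y).

Definition hereditarily_unicoherent (F : nat -> graph)
  (alpha : forall n, gV (F n.+1) -> gV (F n)) : Prop :=
  forall (VP VQ : thread F alpha -> Prop) (EP EQ : thread F alpha -> thread F alpha -> Prop),
    sub_tgraph F alpha VP EP -> sub_tgraph F alpha VQ EQ ->
    (exists x, VP x) -> (exists x, VQ x) ->
    tconnected F alpha VP EP -> tconnected F alpha VQ EQ ->
    tconnected F alpha (fun x => VP x /\ VQ x) (fun x y => EP x y /\ EQ x y).

(* Main.v *)
From Stdlib Require Import Classical ClassicalEpsilon.
Require Import Defs.
From mathcomp Require Import all_boot.

Set Implicit Arguments.
Unset Strict Implicit.

Definition pb (P : Prop) : bool := if excluded_middle_informative P then true else false.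
Lemma pbP (P : Prop) : pb P <-> P.
Proof. rewrite /pb; case: excluded_middle_informative => //. Qed.

Lemma pigeon (S : finType) (f : nat -> S) (Q : S -> Prop) :
  (forall N, exists k, N <= k /\ Q (f k)) ->
  exists s, Q s /\ forall N, exists k, N <= k /\ f k = s.
Proof.
move=> H; apply: NNPP => Hn.
have B : forall l : seq S, exists M, forall s, s \in l -> forall k, M <= k -> Q s -> f k <> s.
{ elim=> [|s0 l [M HM]]; first by exists 0.
  have [N0 HN0] : exists N0, forall k, N0 <= k -> Q s0 -> f k <> s0.
  { case: (classic (Q s0)) => q0; last by exists 0 => k _ /q0.
    have : ~ forall N, exists k, N <= k /\ f k = s0 by move=> hh; apply: Hn; exists s0.
    move/not_all_ex_not => [N0 HN0]; exists N0 => k le _ e; apply: HN0; by exists k. }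
  exists (maxn M N0) => s; rewrite inE => /orP [/eqP-> | sin] k le.
  - apply: HN0; exact: leq_trans (leq_maxr _ _) le.
  - apply: HM => //; exact: leq_trans (leq_maxl _ _) le. }
have [M HM] := B (enum S). have [k [le q]] := H M.
have hk : f k \in enum S by rewrite mem_enum.
exact: (HM (f k) hk k le q erefl).
Qed.

Section Gen.
Variables (T : nat -> finType) (beta : forall n, T n.+1 -> T n)
  (z : nat -> forall n, T n) (zc : forall k n, beta (z k n.+1) = z k n).

Definition Inf n (t : T n) := forall N, exists k, N <= k /\ z k n = t.

Lemma inf0 : exists t : T 0, Inf t.
Proof.
have [s [_ h]] := @pigeon (T 0) (fun k => z k 0) (fun _ => True) (fun N => ex_intro _ N (conj (leqnn N) I)).
by exists s.
Qed.

Lemma infS n (t : T n) : Inf t -> exists t', beta t' = t /\ Inf t'.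
Proof.
move=> H.
have H' : forall N, exists k, N <= k /\ beta (z k n.+1) = t.
  by move=> N; have [k [le e]] := H N; exists k; rewrite zc.
have [s [h1 h2]] := @pigeon (T n.+1) (fun k => z k n.+1) (fun s => beta s = t) H'.
by exists s.
Qed.

Fixpoint build n : {t : T n | Inf t} :=
  match n return {t : T n | Inf t} with
  | 0 => constructive_indefinite_description _ inf0
  | m.+1 => let s := build m in
     let c := constructive_indefinite_description _ (infS (proj2_sig s)) in
     exist _ (proj1_sig c) (proj2 (proj2_sig c))
  end.

Lemma cluster_gen : exists w : forall n, T n, (forall n, beta (w n.+1) = w n) /\ forall n, Inf (w n).
Proof.
exists (fun n => proj1_sig (build n)); split.
- move=> n; exact (proj1 (proj2_sig (constructive_indefinite_description _ (infS (proj2_sig (build n)))))).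
- move=> n; exact: proj2_sig.
Qed.
End Gen.

Lemma path_andb (T : Type) (e1 e2 : rel T) x s :
  path e1 x s -> path e2 x s -> path (fun a b => e1 a b && e2 a b) x s.
Proof.
elim: s x => //= y s IH x /andP[a b] /andP[c d]; rewrite a c /=; exact: IH.
Qed.

Lemma path_inv (T : Type) (e : rel T) (I : T -> Prop) x s :
  path e x s -> I x -> (forall c d, e c d -> I c -> I d) -> I (last x s).
Proof.
elim: s x => //= y s IH x /andP[a b] Ix H; exact: IH b (H _ _ a Ix) H.
Qed.

Section Main.
Variable F : nat -> graph.
Variable alpha : forall n, gV (F n.+1) -> gV (F n).
Local Notation th := (thread F alpha).
Local Notation pr := (tproj F alpha).

Lemma agree_down {x y : th} {m n : nat} : n <= m -> pr m x = pr m y -> pr n x = pr n y.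
Proof.
elim: m => [|m IH] le E.
  by move: le; rewrite leqn0 => /eqP->.
move: le; rewrite leq_eqVlt => /orP[/eqP-> //| lt].
apply: IH => //.
move: (proj2_sig x m) (proj2_sig y m); rewrite /tproj in E * => <- <-; by rewrite E.
Qed.

Lemma cluster (u v : nat -> th) : exists w1 w2 : th, forall n N, exists k,
  N <= k /\ pr n (u k) = pr n w1 /\ pr n (v k) = pr n w2.
Proof.
pose T := fun n => ((F n) * (F n))%type : finType.
pose beta n (t : T n.+1) : T n := (@alpha n t.1, @alpha n t.2).
pose z k n : T n := (pr n (u k), pr n (v k)).
have zc : forall k n, beta n (z k n.+1) = z k n.
  by move=> k n; rewrite /beta /z /tproj /= (proj2_sig (u k) n) (proj2_sig (v k) n).
have [w [wc wi]] := cluster_gen zc.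
exists (@exist _ (fun x : forall n, F n => forall n, @alpha n (x n.+1) = x n) (fun n => (w n).1) (fun n => f_equal fst (wc n))).
exists (@exist _ (fun x : forall n, F n => forall n, @alpha n (x n.+1) = x n) (fun n => (w n).2) (fun n => f_equal snd (wc n))).
move=> n N; have [k [le e]] := wi n N; exists k; split => //.
by rewrite /tproj /= -e.
Qed.

Lemma proj_walk (VP : th -> Prop) EP M (p q : th) :
  sub_tgraph F alpha VP EP -> tconnected F alpha VP EP -> VP p -> VP q ->
  connect (fun c d : F M => pb (exists x y, EP x y /\ pr M x = c /\ pr M y = d)) (pr M p) (pr M q).
Proof.
move=> [cV [cE [EV [Er [Es Et]]]]] Hc Vp Vq.
set e := (fun c d => _).
apply: NNPP => nc; apply: Hc.
exists (fun x => VP x /\ connect e (pr M p) (pr M x)),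
       (fun x => VP x /\ ~ connect e (pr M p) (pr M x)).
split.
  move=> x; split => [Vx|]; last tauto.
  by case: (classic (connect e (pr M p) (pr M x))); tauto.
split; first by exists p; split => //; exact: connect0.
split; first by exists q.
split; first by move=> x [[_ a] [_ b]].
split.
  move=> x H; split.
    apply: cV => j; have [y [[Vy _] ey]] := H j; by exists y.
  have [y [[_ cy] ey]] := H M; by rewrite -ey.
split.
  move=> x H; split.
    apply: cV => j; have [y [[Vy _] ey]] := H j; by exists y.
  have [y [[_ cy] ey]] := H M; by rewrite -ey.
have ext : forall x y, EP x y -> connect e (pr M p) (pr M x) -> connect e (pr M p) (pr M y).
  move=> a b Eab ca; apply: connect_trans ca (connect1 _).
  by apply/pbP; exists a, b.
move=> x y [Vx cx] [Vy ny]; split => Exy.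
  apply: ny; exact: ext Exy cx.
apply: ny; exact: ext (Es _ _ Exy) cx.
Qed.

Lemma lift_edge VP EP VQ EQ n a b :
  sub_tgraph F alpha VP EP -> sub_tgraph F alpha VQ EQ ->
  (forall m, n <= m -> exists x y x' y', EP x y /\ EQ x' y' /\ pr m x = pr m x' /\
      pr m y = pr m y' /\ pr n x = a /\ pr n y = b) ->
  exists w1 w2, EP w1 w2 /\ EQ w1 w2 /\ pr n w1 = a /\ pr n w2 = b.
Proof.
move=> [_ [cEP _]] [_ [cEQ _]] H.
have Hk : forall k, {t : th * th * th * th | EP t.1.1.1 t.1.1.2 /\ EQ t.1.2 t.2 /\
   pr (maxn n k) t.1.1.1 = pr (maxn n k) t.1.2 /\ pr (maxn n k) t.1.1.2 = pr (maxn n k) t.2 /\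
   pr n t.1.1.1 = a /\ pr n t.1.1.2 = b}.
  move=> k; apply: constructive_indefinite_description.
  have [x [y [x' [y' h]]]] := H (maxn n k) (leq_maxl _ _).
  by exists (x, y, x', y').
pose u k := (proj1_sig (Hk k)).1.1.1.
pose v k := (proj1_sig (Hk k)).1.1.2.
pose u' k := (proj1_sig (Hk k)).1.2.
pose v' k := (proj1_sig (Hk k)).2.
have [w1 [w2 Hw]] := cluster u v.
exists w1, w2; split.
  apply: cEP => j; have [k [le [e1 e2]]] := Hw j 0.
  exists (u k), (v k); split => //; exact: (proj1 (proj2_sig (Hk k))).
split.
  apply: cEQ => j; have [k [le [e1 e2]]] := Hw j j.
  have [h1 [h2 [h3 [h4 [h5 h6]]]]] := proj2_sig (Hk k).
  have lek : j <= maxn n k by exact: leq_trans le (leq_maxr _ _).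
  exists (u' k), (v' k); split => //; split.
    by rewrite -e1; symmetry; exact: agree_down lek h3.
  by rewrite -e2; symmetry; exact: agree_down lek h4.
have [k [_ [e1 e2]]] := Hw n 0.
have [h1 [h2 [h3 [h4 [h5 h6]]]]] := proj2_sig (Hk k).
by split; [rewrite -e1 | rewrite -e2].
Qed.

End Main.

Theorem theorem2p18 (mem : graph -> Prop) (fx : fixed_rel) (F : nat -> graph)
  (alpha : forall n, gV (F n.+1) -> gV (F n)) :
  is_proj_fraisse mem fx ->
  (forall A, mem A -> is_tree A) ->
  is_fraisse_limit mem fx F alpha ->
  hereditarily_unicoherent F alpha.
Proof.
move=> _ Htree [Hmem _].
have tree n : is_tree (F n) := Htree _ (Hmem n).
move=> VP VQ EP EQ sP sQ _ _ cP cQ.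
move=> [P' [Q' [Hcov [[p Pp] [[q Qq] [Hdisj [clP [clQ Hne]]]]]]]].
have [n Hn] : exists n, forall x y, P' x -> Q' y -> tproj F alpha n x <> tproj F alpha n y.
{ apply: NNPP => H.
  have H2 : forall n, exists xy : thread F alpha * thread F alpha,
      P' xy.1 /\ Q' xy.2 /\ tproj F alpha n xy.1 = tproj F alpha n xy.2.
  { move=> n; apply: NNPP => h; apply: H; exists n => x y Px Qy e; apply: h; by exists (x, y). }
  pose g n := proj1_sig (constructive_indefinite_description _ (H2 n)).
  have [w1 [w2 Hw]] := cluster (fun k => (g k).1) (fun k => (g k).2).
  apply: (Hdisj w1); split.
  - apply: clP => j; have [k [le [e1 _]]] := Hw j j.
    exists (g k).1; split => //.
    by case: (proj2_sig (constructive_indefinite_description _ (H2 k))).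
  - apply: clQ => j; have [k [le [e1 _]]] := Hw j j.
    have [a [b c]] := proj2_sig (constructive_indefinite_description _ (H2 k)).
    exists (g k).2; split => //.
    rewrite -e1; exact: agree_down le (esym c). }
pose NLm m a b := ~ exists x y x' y', EP x y /\ EQ x' y' /\
   tproj F alpha m x = tproj F alpha m x' /\ tproj F alpha m y = tproj F alpha m y' /\
   tproj F alpha n x = a /\ tproj F alpha n y = b.
pose Lift a b := forall m, n <= m -> exists x y x' y', EP x y /\ EQ x' y' /\
   tproj F alpha m x = tproj F alpha m x' /\ tproj F alpha m y = tproj F alpha m y' /\
   tproj F alpha n x = a /\ tproj F alpha n y = b.
have mono : forall m m' a b, NLm m a b -> m <= m' -> NLm m' a b.
{ move=> m m' a b nl le [x [y [x' [y' [h1 [h2 [h3 [h4 [h5 h6]]]]]]]]].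
  apply: nl; exists x, y, x', y'.
  split; first exact: h1. split; first exact: h2.
  split; first exact: (agree_down le h3).
  split; first exact: (agree_down le h4).
  by split. }
have [M [leM HM]] : exists M, n <= M /\
    forall ab : (F n * F n)%type, ~ Lift ab.1 ab.2 -> NLm M ab.1 ab.2.
{ have : forall l : seq (F n * F n)%type, exists M, n <= M /\
      forall ab, ab \in l -> ~ Lift ab.1 ab.2 -> NLm M ab.1 ab.2.
    elim=> [|ab l [M [le HM]]]; first by exists n.
    case: (classic (Lift ab.1 ab.2)) => hl.
      exists M; split => // ab'; rewrite inE => /orP[/eqP-> //|]; exact: HM.
    have [m0 hm0] := not_all_ex_not _ _ hl.
    have [le0 nl0] := imply_to_and _ _ hm0.
    exists (maxn M m0); split; first exact: leq_trans le (leq_maxl _ _).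
    move=> ab'; rewrite inE => /orP[/eqP-> _ | ab'in nl].
      exact: mono nl0 (leq_maxr _ _).
    exact: mono (HM _ ab'in nl) (leq_maxl _ _).
  pose PT : finType := (F n * F n)%type.
  move/(_ (enum PT)) => [M [le HM]]; exists M; split => // ab; apply: HM.
  by rewrite mem_enum. }
have [Vp Wp] := (proj2 (Hcov p)) (or_introl Pp).
have [Vq Wq] := (proj2 (Hcov q)) (or_intror Qq).
case: (tproj F alpha M p =P tproj F alpha M q) => eMpq.
  by apply: (Hn p q Pp Qq); exact: agree_down leM eMpq.
have neq : tproj F alpha M p != tproj F alpha M q by apply/eqP.
have [s [[gs [ls us]] uniqT]] := tree M _ _ neq.
have walk : forall (V : thread F alpha -> Prop) E, sub_tgraph F alpha V E -> tconnected F alpha V E ->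
   V p -> V q ->
   path (fun c d : F M => pb (exists x y, E x y /\ tproj F alpha M x = c /\ tproj F alpha M y = d))
      (tproj F alpha M p) s.
{ move=> V E sV cV Vp' Vq'.
  have := proj_walk M sV cV Vp' Vq'.
  move/connectP => [s0 ps0 ls0].
  move: ls0; case/shortenP: ps0 => s1 ps1 us1 _ ls1.
  have gp : path (gE (F M)) (tproj F alpha M p) s1.
    apply: sub_path ps1 => c d /pbP [x [y [Exy [<- <-]]]].
    by have [_ [_ [_ [_ [_ Et]]]]] := sV; exact: Et _ _ Exy M.
  have -> // : s = s1 by apply: uniqT; split => //; split.
}
have pPQ := path_andb (walk _ _ sP cP Vp Vq) (walk _ _ sQ cQ Wp Wq).
pose I := fun c : F M => exists x z, P' x /\ tproj F alpha M z = c /\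
    tproj F alpha n z = tproj F alpha n x.
have := path_inv (I := I) pPQ.
rewrite ls => HI.
have [x [z [Px [ez ezn]]]] : I (tproj F alpha M q).
{ apply: HI; first by exists p, p.
  move=> c d /andP[/pbP [x1 [y1 [E1 [ex1 ey1]]]] /pbP [x1' [y1' [E1' [ex1' ey1']]]]].
  move=> [x [z [Px [ez ezn]]]].
  have L : Lift (tproj F alpha n x1) (tproj F alpha n y1).
    apply: NNPP => nl; apply: (HM (tproj F alpha n x1, tproj F alpha n y1) nl).
    exists x1, y1, x1', y1'; do 2! split => //.
    split; first by rewrite ex1 ex1'.
    split; first by rewrite ey1 ey1'.
    by [].
  have [w1 [w2 [Ew1 [Ew2 [e1 e2]]]]] := lift_edge sP sQ L.
  have [_ [_ [EVP _]]] := sP. have [_ [_ [EVQ _]]] := sQ.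
  have [Vw1 Vw2] := EVP _ _ Ew1. have [Ww1 Ww2] := EVQ _ _ Ew2.
  have Pw1 : P' w1.
    case: ((proj1 (Hcov w1)) (conj Vw1 Ww1)) => // Qw1; exfalso.
    apply: (Hn x w1 Px Qw1); rewrite e1 -ezn.
    by symmetry; apply: agree_down leM _; rewrite ez ex1.
  have Pw2 : P' w2.
    case: ((proj1 (Hcov w2)) (conj Vw2 Ww2)) => // Qw2; exfalso.
    by have [h _] := Hne w1 w2 Pw1 Qw2; apply: h.
  exists w2, y1; split => //; split => //; by rewrite ?e2. }
apply: (Hn x q Px Qq); rewrite -ezn; exact: agree_down leM ez.
Qed.
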